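(* For every $n\ge 1$, the upper-diagonal CNMs of size $n$ are in bijection with the permutations in $S_{n-1}$; in particular there are exactly $(n-1)!$ upper-diagonal CNMs of size $n$.
   Context: A complete non-ambiguous matrix (CNM) of size $n$ is an $n\times n$ matrix $M=(m_{i,j})$ with entries in $\{0,1\}$ whose support $T=\{(i,j): m_{i,j}=1\}$ (whose elements are called vertices) satisfies: (1) $(1,1)\in T$; (2) for every $p=(i,j)\in T$ with $p\neq(1,1)$, exactly one of the following holds: there is $(i',j)\in T$ with $i'<i$, or there is $(i,j')\in T$ with $j'<j$; (3) every row and every column of $M$ contains at least one vertex; (4) define the parent of $p=(i,j)\neq(1,1)$ to be $(i',j)$ with $i'<i$ maximal if such a vertex exists, and otherwise $(i,j')$ with $j'<j$ maximal; then every vertex is the parent of either zero or exactly two vertices. A vertex with no children is a leaf. A CNM of size $n$ is upper-diagonal if its leaves are exactly the positions $(i,n+1-i)$, $1\le i\le n$ (i.e. its leaf matrix is the anti-diagonal permutation matrix). *)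

(* Defs.v *)
(* Matrices of size n are represented by their support
   T : {set 'I_n * 'I_n}; positions are 0-indexed, so the paper's (1,1)
   is (0,0) and the anti-diagonal (i, n+1-i) becomes (i, n-1-i). *)
From mathcomp Require Import all_boot all_order.
Set Implicit Arguments. Unset Strict Implicit. Unset Printing Implicit Defensive.

Section CNM.
Variable n : nat.
Notation pos := ('I_n * 'I_n)%type.

Definition is_origin (p : pos) : bool := (val p.1 == 0) && (val p.2 == 0).

Definition has_above (T : {set pos}) (p : pos) : bool :=
  [exists q in T, (q.2 == p.2) && (val q.1 < val p.1)].
Definition has_left (T : {set pos}) (p : pos) : bool :=
  [exists q in T, (q.1 == p.1) && (val q.2 < val p.2)].

Definition is_parent (T : {set pos}) (v p : pos) : bool :=
  [&& v \in T, p \in T, ~~ is_origin p &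
   if has_above T p then
     [&& v.2 == p.2, val v.1 < val p.1 &
      ~~ [exists w in T, [&& w.2 == p.2, val v.1 < val w.1 & val w.1 < val p.1]]]
   else
     [&& v.1 == p.1, val v.2 < val p.2 &
      ~~ [exists w in T, [&& w.1 == p.1, val v.2 < val w.2 & val w.2 < val p.2]]]].

Definition nchildren (T : {set pos}) (v : pos) : nat :=
  #|[set p in T | is_parent T v p]|.

Definition is_CNM (T : {set pos}) : bool :=
  [&& [exists p in T, is_origin p],
      [forall p in T, ~~ is_origin p ==> (has_above T p (+) has_left T p)],
      [forall i : 'I_n, exists p in T, p.1 == i],
      [forall j : 'I_n, exists p in T, p.2 == j] &
      [forall v in T, (nchildren T v == 0) || (nchildren T v == 2)]].

Definition is_leaf (T : {set pos}) (v : pos) : bool :=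
  (v \in T) && (nchildren T v == 0).

(* leaf matrix = anti-diagonal permutation matrix *)
Definition is_upper_diagonal_CNM (T : {set pos}) : bool :=
  is_CNM T && [forall p : pos, is_leaf T p == (val p.1 + val p.2 == n.-1)].

End CNM.

(* Main.v *)
Require Import Defs.
From mathcomp Require Import all_boot all_order all_fingroup zify.
Set Implicit Arguments. Unset Strict Implicit. Unset Printing Implicit Defensive.

Ltac slia := simpl in *; lia.

Section Main.
Variable N : nat.
Local Notation n := N.+1.
Local Notation pos := ('I_n * 'I_n)%type.

Definition Char (T : {set pos}) : bool :=
  [&& (ord0, ord0) \in T,
      [forall p in T, ~~ is_origin p ==> (has_above T p (+) has_left T p)],
      [forall p in T, val p.1 + val p.2 <= N] &
      [forall p : pos, (val p.1 + val p.2 == N) ==> (p \in T)]].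

Lemma pos_eq (p q : pos) : val p.1 = val q.1 -> val p.2 = val q.2 -> p = q.
Proof. by case: p q => [a b] [c d] /= /val_inj -> /val_inj ->. Qed.

Lemma parent_dir (T : {set pos}) v p : is_parent T v p ->
  [/\ v \in T, p \in T, ~~ is_origin p &
   ((v.2 == p.2) && (val v.1 < val p.1)) || ((v.1 == p.1) && (val v.2 < val p.2))].
Proof.
case/and4P=> vT pT no; case: ifP => _ /and3P [-> -> _]; by rewrite ?orbT.
Qed.

Lemma parent_sum (T : {set pos}) v p : is_parent T v p ->
  val v.1 + val v.2 < val p.1 + val p.2.
Proof.
case/parent_dir=> _ _ _ /orP [] /andP [/eqP -> h]; lia.
Qed.

Lemma origin_eq (p : pos) : is_origin p -> p = (ord0, ord0).
Proof. by case/andP=> /eqP a /eqP b; apply: pos_eq. Qed.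

Lemma UD_Char (T : {set pos}) : is_upper_diagonal_CNM T -> Char T.
Proof.
case/andP=> /and5P [Ho Hx Hr Hc Hch] /forallP Hl.
have C4 : forall p : pos, val p.1 + val p.2 = N -> p \in T.
  by move=> p e; move: (Hl p); rewrite e eqxx => /eqP /andP [].
apply/and4P; split => //.
- by case/existsP: Ho => p /andP [pT /origin_eq <-].
- apply/forallP => p; apply/implyP => pT; rewrite leqNgt; apply/negP => hp.
  pose q := [arg max_(q > p | q \in T) (val q.1 + val q.2)].
  have [q' qT qmax] : extremum_spec geq (fun q => q \in T) (fun q : pos => val q.1 + val q.2) q
    by apply: arg_maxnP.
  have hq : val p.1 + val p.2 <= val q'.1 + val q'.2 := qmax p pT.
  have nl : is_leaf T q' = false.
    by rewrite (eqP (Hl q')); apply/negbTE/eqP => /= H; move: hp hq H => /=; lia.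
  move: (forallP Hch q'); rewrite qT /= => h.
  have : nchildren T q' != 0.
    by move: nl; rewrite /is_leaf qT /=; move/negbT.
  rewrite /nchildren -lt0n card_gt0 => /set0Pn [c]; rewrite inE => /andP [cT pc].
  have : val c.1 + val c.2 <= val q'.1 + val q'.2 := qmax c cT.
  have := parent_sum pc; move: hp hq => /=; lia.
- by apply/forallP => p; apply/implyP => /eqP; apply: C4.
Qed.

Section CharProps.
Variable T : {set pos}.
Hypothesis HC : Char T.

Lemma C1 : (ord0, ord0) \in T.
Proof. by case/and4P: HC. Qed.
Lemma C2 p : p \in T -> ~~ is_origin p -> has_above T p (+) has_left T p.
Proof. by case/and4P: HC => _ /forallP h _ _ pT np; move: (h p); rewrite pT np. Qed.
Lemma C3 p : p \in T -> val p.1 + val p.2 <= N.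
Proof. by case/and4P: HC => _ _ /forallP h _ pT; move/implyP: (h p); apply. Qed.
Lemma C4 p : val p.1 + val p.2 = N -> p \in T.
Proof. by case/and4P: HC => _ _ _ /forallP h e; move/implyP: (h p); apply; apply/eqP. Qed.

Lemma nch_leaf v : val v.1 + val v.2 = N -> nchildren T v = 0.
Proof.
move=> e; apply: eq_card0 => p; rewrite inE; apply/negbTE/andP => [[pT pc]].
have := C3 pT; have := parent_sum pc; move: e => /=; lia.
Qed.

Lemma nch_int v : v \in T -> val v.1 + val v.2 < N -> nchildren T v = 2.
Proof.
move=> vT lt.
have w1lt : N - val v.2 < n by lia.
pose w1 : pos := (Ordinal w1lt, v.2).
have w2lt : N - val v.1 < n by lia.
pose w2 : pos := (v.1, Ordinal w2lt).
pose P1 := fun q : pos => [&& q \in T, q.2 == v.2 & val v.1 < val q.1].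
pose P2 := fun q : pos => [&& q \in T, q.1 == v.1 & val v.2 < val q.2].
have P1w : P1 w1 by rewrite /P1 /= eqxx C4 /=; move: lt => /=; lia.
have P2w : P2 w2 by rewrite /P2 /= eqxx C4 /=; move: lt => /=; lia.
have [c1 /and3P [c1T /eqP c12 c11] c1min] :=
  arg_minnP (fun q : pos => val q.1) P1w.
have [c2 /and3P [c2T /eqP c21 c22] c2min] :=
  arg_minnP (fun q : pos => val q.2) P2w.
have e : [set p in T | is_parent T v p] = [set c1; c2].
  apply/setP => p; rewrite !inE; apply/andP/orP.
  - case=> pT; case/and4P=> _ _ _; case: ifP => _ /and3P [/eqP e2 lt1 nw].
    + left; apply/eqP/pos_eq; last by rewrite c12 e2.
      have : val c1.1 <= val p.1 by apply: c1min; rewrite /P1 pT -e2 eqxx.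
      rewrite leq_eqVlt => /orP [/eqP //|hlt].
      by case/negP: nw; apply/existsP; exists c1; rewrite c1T c12 -e2 eqxx c11 hlt.
    + right; apply/eqP/pos_eq; first by rewrite c21 e2.
      have : val c2.2 <= val p.2 by apply: c2min; rewrite /P2 pT -e2 eqxx.
      rewrite leq_eqVlt => /orP [/eqP //|hlt].
      by case/negP: nw; apply/existsP; exists c2; rewrite c2T c21 -e2 eqxx c22 hlt.
  - case=> /eqP ->.
    + rewrite c1T; split => //; apply/and4P; split => //.
        by rewrite /is_origin negb_and; apply/orP; left; apply/eqP => /= h; move: c11 h => /=; lia.
      have -> : has_above T c1 by apply/existsP; exists v; rewrite vT c12 eqxx.
      rewrite c12 eqxx c11 /=; apply/existsP => [[w /and4P [wT /eqP ew h1 h2]]].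
      have : val c1.1 <= val w.1 by apply: c1min; rewrite /P1 wT ew -c12 eqxx h1.
      move: h2 => /=; lia.
    + have nc2 : ~~ is_origin c2.
        by rewrite /is_origin negb_and; apply/orP; right; apply/eqP => /= h; move: c22 h => /=; lia.
      have hl : has_left T c2 by apply/existsP; exists v; rewrite vT c21 eqxx.
      have ha : has_above T c2 = false by move: (C2 c2T nc2); rewrite hl addbT => /negbTE.
      rewrite c2T; split => //; apply/and4P; split => //.
      rewrite ha c21 eqxx c22 /=; apply/existsP => [[w /and4P [wT /eqP ew h1 h2]]].
      have : val c2.2 <= val w.2 by apply: c2min; rewrite /P2 wT ew -c21 eqxx h1.
      move: h2 => /=; lia.
rewrite /nchildren e cards2; case: eqP => // h.
by move: c11; rewrite h c21 ltnn.
Qed.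

End CharProps.

Lemma Char_UD (T : {set pos}) : Char T -> is_upper_diagonal_CNM T.
Proof.
move=> HC; apply/andP; split.
  apply/and5P; split.
  - by apply/existsP; exists (ord0, ord0); rewrite C1.
  - by apply/forallP => p; apply/implyP => pT; apply/implyP; apply: C2.
  - apply/forallP => i; have lt : N - val i < n by lia.
    by apply/existsP; exists (i, Ordinal lt); rewrite C4 //= ; move: (ltn_ord i) => /=; lia.
  - apply/forallP => j; have lt : N - val j < n by lia.
    by apply/existsP; exists (Ordinal lt, j); rewrite C4 //= ; move: (ltn_ord j) => /=; lia.
  - apply/forallP => v; apply/implyP => vT.
    have := C3 HC vT; rewrite leq_eqVlt => /orP [/eqP e|lt].
      by rewrite nch_leaf.
    by rewrite nch_int.
apply/forallP => p; rewrite /is_leaf.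
case: (boolP (val p.1 + val p.2 == N)) => [/eqP e|ne].
  by rewrite C4 // nch_leaf.
case: (boolP (p \in T)) => //= pT.
have := C3 HC pT; rewrite leq_eqVlt (negbTE ne) /= => lt.
by rewrite nch_int.
Qed.


Definition Fok (f : {ffun 'I_n -> 'I_n}) : bool :=
  [forall j, val (f j) < maxn 1 (val j)].

Definition anc (f : {ffun 'I_n -> 'I_n}) (j k : 'I_n) : bool :=
  [exists m : 'I_n, iter m f k == j].

Lemma anc_refl f j : anc f j j.
Proof. by apply/existsP; exists ord0. Qed.

Definition Mo f (j : 'I_n) : 'I_n := [arg max_(k > j | anc f j k) val k].

Definition Tf (f : {ffun 'I_n -> 'I_n}) : {set pos} :=
  [set p : pos | [exists j : 'I_n, (val p.1 + val (Mo f j) == N) &&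
                   ((p.2 == j) || ((val j != 0) && (p.2 == f j)))]
               || (val p.1 + val p.2 == N)].

Section FProps.
Variable f : {ffun 'I_n -> 'I_n}.
Hypothesis Hf : Fok f.
Local Notation Mf := (Mo f).


Lemma f_lt j : val (f j) <= val j - 1.
Proof. by move/forallP: Hf => /(_ j); rewrite /maxn; case: ifP => /=; lia. Qed.

Lemma f_ltj j : val j != 0 -> val (f j) < val j.
Proof. by move: (f_lt j) => /=; lia. Qed.

Lemma iter_le m k : val (iter m f k) <= val k - m.
Proof.
elim: m => [|m IH] /=; first by lia.
by move: (f_lt (iter m f k)) IH => /=; lia.
Qed.

Lemma iter_big m k : val k <= m -> iter m f k = ord0.
Proof. by move=> h; apply/val_inj => /=; move: (iter_le m k) h => /=; lia. Qed.

Lemma ancP j k : reflect (exists m, iter m f k = j) (anc f j k).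
Proof.
apply: (iffP existsP) => [[m /eqP <-]|[m e]]; first by exists m.
case: (ltnP m n) => hm; first by exists (Ordinal hm); rewrite e.
exists ord_max; rewrite -e !iter_big //=; move: (ltn_ord k) => /=; lia.
Qed.

Lemma anc_le j k : anc f j k -> val j <= val k.
Proof. by case/ancP => m <-; move: (iter_le m k) => /=; lia. Qed.

Lemma anc_antisym a b : anc f a b -> anc f b a -> a = b.
Proof. by move=> h1 h2; apply/val_inj/eqP; rewrite eqn_leq !anc_le. Qed.

Lemma anc_trans i j k : anc f i j -> anc f j k -> anc f i k.
Proof.
case/ancP => m1 <- /ancP [m2 <-]; apply/ancP; exists (m1 + m2).
by rewrite iterD.
Qed.

Lemma anc_f j : anc f (f j) j.
Proof. by apply/ancP; exists 1. Qed.

Lemma anc0 k : anc f ord0 k.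
Proof. by apply/ancP; exists (val k); rewrite iter_big. Qed.

Lemma anc_step j k : anc f j k -> j != k -> anc f j (f k).
Proof.
case/ancP => [[|m]] <-; first by rewrite /= eqxx.
by move=> _; apply/ancP; exists m; rewrite -iterSr.
Qed.

Lemma anc_lin a b K : anc f a K -> anc f b K -> anc f a b || anc f b a.
Proof.
case/ancP => m1 <- /ancP [m2 <-].
case: (leqP m1 m2) => h.
  apply/orP; right; apply/ancP; exists (m2 - m1).
  by rewrite -iterD subnK.
apply/orP; left; apply/ancP; exists (m1 - m2).
by rewrite -iterD subnK // ltnW.
Qed.

Lemma Mo_spec j : anc f j (Mf j) /\ forall k, anc f j k -> val k <= val (Mf j).
Proof.
rewrite /Mf /Mo; case: (arg_maxnP (fun k : 'I_n => val k) (anc_refl f j)) => k h1 h2.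
by split => // k' /h2.
Qed.

Lemma Mo_anc j : anc f j (Mf j). Proof. by case: (Mo_spec j). Qed.
Lemma Mo_max j k : anc f j k -> val k <= val (Mf j). Proof. by case: (Mo_spec j) => _; apply. Qed.
Lemma Mo_ge j : val j <= val (Mf j). Proof. exact/Mo_max/anc_refl. Qed.
Lemma Mo_mono a b : anc f a b -> val (Mf b) <= val (Mf a).
Proof. by move=> h; apply: Mo_max; apply: anc_trans h (Mo_anc b). Qed.
Lemma Mo0 : val (Mf ord0) = N.
Proof.
have := ltn_ord (Mf ord0); have := Mo_max (anc0 ord_max); move=> /=; lia.
Qed.


Lemma TfP p : reflect ((exists j, val p.1 + val (Mf j) = N /\ (p.2 = j \/ (val j <> 0 /\ p.2 = f j)))
                       \/ val p.1 + val p.2 = N) (p \in Tf f).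
Proof.
rewrite inE; apply: (iffP orP) => [[/existsP [j /andP [/eqP e /orP [/eqP h|/andP [/eqP h1 /eqP h2]]]]|/eqP e]|].
- by left; exists j; split => //; left.
- by left; exists j; split => //; right.
- by right.
case=> [[j [e [h|[h1 h2]]]]|e].
- by left; apply/existsP; exists j; rewrite e h !eqxx.
- by left; apply/existsP; exists j; rewrite e h2 !eqxx andbT /=; apply/orP; right; apply/eqP.
- by right; apply/eqP.
Qed.

Lemma Mo_le c : val (Mf c) <= N.
Proof. by move: (ltn_ord (Mf c)) => /=; slia. Qed.

Lemma Tf_col p : p \in Tf f -> N <= val p.1 + val (Mf p.2).
Proof.
case/TfP => [[j [e [->|[_ ->]]]]|e]; first by slia.
  by move: (Mo_mono (anc_f j)) => /=; slia.
by move: (Mo_ge p.2) => /=; slia.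
Qed.

Lemma Tf_sum p : p \in Tf f -> val p.1 + val p.2 <= N.
Proof.
case/TfP => [[j [e [->|[h1 ->]]]]|e]; last by slia.
  by move: (Mo_ge j) => /=; slia.
by move: (Mo_ge j) (@f_ltj j (introN eqP h1)) => /=; slia.
Qed.

Lemma top_lt c : N - val (Mf c) < n.
Proof. by slia. Qed.

Lemma top_in c : (Ordinal (top_lt c), c) \in Tf f.
Proof. by apply/TfP; left; exists c; split => //=; [move: (Mo_le c) => /=; lia | left]. Qed.

Lemma Tf_above p : has_above (Tf f) p = (N < val p.1 + val (Mf p.2)).
Proof.
apply/existsP/idP => [[q /andP [qT /andP [/eqP e lt]]]|h].
  by move: (Tf_col qT) lt; rewrite e => /=; slia.
exists (Ordinal (top_lt p.2), p.2); rewrite top_in eqxx /=.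
by move: h (Mo_le p.2) => /=; slia.
Qed.

Lemma Mo_eq a b : val (Mf a) = val (Mf b) -> Mf a = Mf b.
Proof. by move/val_inj. Qed.

Lemma Tf_xor p : p \in Tf f -> ~~ is_origin p -> has_above (Tf f) p (+) has_left (Tf f) p.
Proof.
move=> pT no; rewrite Tf_above.
case: (boolP (val p.1 + val (Mf p.2) == N)) => [/eqP e|ne].
  have c0 : val p.2 != 0.
    apply/negP => /eqP c0; move: no; rewrite /is_origin c0 eqxx andbT => /negP; apply.
    have e2 : p.2 = ord0 by apply/val_inj.
    by move: e; rewrite e2 Mo0 => ?; apply/eqP; slia.
  have -> : N < val p.1 + val (Mf p.2) = false by apply/negbTE; slia.
  rewrite /=; apply/existsP; exists (p.1, f p.2); rewrite /= eqxx /=.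
  rewrite (f_ltj c0) andbT; apply/TfP; left; exists p.2; split => //; right; split => //.
  by apply/eqP.
have gt : N < val p.1 + val (Mf p.2) by move: (Tf_col pT) ne => /=; slia.
rewrite gt /=; apply/existsP => [[q /andP [qT /andP [/eqP e1 lt]]]].
have aMc := Mo_anc p.2.
have e1v : val q.1 = val p.1 by rewrite e1.
case/TfP: pT => [[j [ej [hj|[j0 hj]]]]|ea].
  by move: ne; rewrite hj ej eqxx.
-
  case/TfP: qT => [[j' [ej' [hj'|[j'0 hj']]]]|ea'].
  + have Mjj : Mf j' = Mf j by apply: Mo_eq; move: ej ej'; rewrite e1 => /=; slia.
    have aj' := Mo_anc j'; rewrite Mjj in aj'; case/orP: (anc_lin (Mo_anc j) aj') => h.
    * have := anc_le h; move: lt (@f_ltj j (introN eqP j0)); rewrite hj hj' => /=; slia.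
    * case: (eqVneq j' j) => [ejj|njj].
        by move: lt (@f_ltj j (introN eqP j0)); rewrite hj hj' ejj => /=; slia.
      have := Mo_mono (anc_step h njj); rewrite -hj; slia.
  + have Mjj : Mf j' = Mf j by apply: Mo_eq; move: ej ej'; rewrite e1 => /=; slia.
    case: (eqVneq j' j) => [ejj|njj]; first by move: lt; rewrite hj hj' ejj ltnn.
    have aj' := Mo_anc j'; rewrite Mjj in aj'; case/orP: (anc_lin (Mo_anc j) aj') => h.
    * have njj' : j != j' by rewrite eq_sym.
      have := anc_le (anc_step h njj'); move: lt (@f_ltj j (introN eqP j0)); rewrite hj hj' => /=; slia.
    * have := Mo_mono (anc_step h njj); rewrite -hj; move: ej' e1 gt => /=; slia.
  + move: ea' lt (Mo_ge j) (@f_ltj j (introN eqP j0)); rewrite hj e1; move: ej => /=; slia.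
-
  case/TfP: qT => [[j' [ej' [hj'|[j'0 hj']]]]|ea'].
  + have Mq : Mf j' = p.2 by apply/val_inj; move: ej' ea; rewrite e1 => /=; slia.
    have := Mo_mono (Mo_anc j'); rewrite Mq; move: ej' gt; rewrite e1 => /=; slia.
  + have Mq : Mf j' = p.2 by apply/val_inj; move: ej' ea; rewrite e1 => /=; slia.
    have := Mo_mono (Mo_anc j'); rewrite Mq; move: ej' gt; rewrite e1 => /=; slia.
  + by move: ea' ea lt; rewrite e1 => /=; slia.
Qed.


Lemma Tf_char : Char (Tf f).
Proof.
apply/and4P; split.
- apply/TfP; left; exists ord0; split; last by left.
  by rewrite Mo0.
- by apply/forallP => p; apply/implyP => pT; apply/implyP; apply: Tf_xor.
- by apply/forallP => p; apply/implyP; apply: Tf_sum.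
- by apply/forallP => p; apply/implyP => /eqP e; apply/TfP; right.
Qed.

Lemma f_in c : val c != 0 -> (Ordinal (top_lt c), f c) \in Tf f.
Proof.
move=> c0; apply/TfP; left; exists c; split; first by move: (Mo_le c); slia.
by right; split => //; apply/eqP.
Qed.

Lemma maxleft c q : val c != 0 -> q \in Tf f -> val q.1 + val (Mf c) = N ->
  val q.2 < val c -> val q.2 <= val (f c).
Proof.
move=> c0 qT e lt.
have ac := Mo_anc c.
case/TfP: qT => [[j' [ej' [hj'|[j'0 hj']]]]|ea'].
- have Mjj : Mf j' = Mf c by apply: Mo_eq; slia.
  have aj' := Mo_anc j'; rewrite Mjj in aj'.
  case/orP: (anc_lin ac aj') => h.
    by have := anc_le h; rewrite -hj'; slia.
  case: (eqVneq j' c) => [ejj|njj]; first by move: lt; rewrite hj' ejj ltnn.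
  by have := anc_le (anc_step h njj); rewrite -hj'.
- have Mjj : Mf j' = Mf c by apply: Mo_eq; slia.
  have aj' := Mo_anc j'; rewrite Mjj in aj'.
  case: (eqVneq j' c) => [ejj|njj]; first by rewrite hj' ejj.
  case/orP: (anc_lin ac aj') => h.
    have ncj : c != j' by rewrite eq_sym.
    by have := anc_le (anc_step h ncj); rewrite -hj'; slia.
  have := anc_le (anc_step h njj); have := @f_ltj j' (introN eqP j'0); rewrite -hj'; slia.
- by have := Mo_ge c; slia.
Qed.

End FProps.

Lemma Tf_inj f1 f2 : Fok f1 -> Fok f2 -> Tf f1 = Tf f2 -> f1 = f2.
Proof.
move=> H1 H2 eT.
have eM : forall c, val (Mo f1 c) = val (Mo f2 c).
  move=> c; apply/eqP; rewrite eqn_leq; apply/andP; split.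
    have h := top_in H1 c; rewrite eT in h.
    have := Tf_col H2 h; have := Mo_le H1 c; slia.
  have h := top_in H2 c; rewrite -eT in h.
  have := Tf_col H1 h; have := Mo_le H2 c; slia.
apply/ffunP => c; apply/val_inj.
case: (eqVneq (val c) 0) => [c0|c0].
  move/forallP: H1 => /(_ c); move/forallP: H2 => /(_ c); rewrite c0 /=; slia.
apply/eqP; rewrite eqn_leq; apply/andP; split.
  have h := f_in H1 c0; rewrite eT in h.
  apply: (maxleft H2 c0 h); [by have := Mo_le H1 c; rewrite /= eM; slia | exact: f_ltj].
have h := f_in H2 c0; rewrite -eT in h.
apply: (maxleft H1 c0 h); [by have := Mo_le H2 c; rewrite /= -eM; slia | exact: f_ltj].
Qed.

Definition gpred (T : {set pos}) (c c' : 'I_n) : bool :=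
  [exists r : 'I_n, [&& (r, c) \in T, ~~ has_above T (r, c), (r, c') \in T, val c' < val c &
     ~~ [exists w : 'I_n, [&& (r, w) \in T, val c' < val w & val w < val c]]]].

Definition g (T : {set pos}) : {ffun 'I_n -> 'I_n} :=
  [ffun c => odflt ord0 [pick c' | gpred T c c']].

Lemma g_Fok T : Fok (g T).
Proof.
apply/forallP => c; rewrite ffunE; case: pickP => [c' /existsP [r /and5P [_ _ _ h _]]|_] /=.
  by slia.
by slia.
Qed.

Lemma g0 T c : val c = 0 -> g T c = c.
Proof.
move=> c0; rewrite ffunE; case: pickP => [c' /existsP [r /and5P [_ _ _ h _]]|_] /=.
  by move: h; rewrite c0.
by apply/val_inj; rewrite c0.
Qed.

Section GProps.
Variable T : {set pos}.
Hypothesis HC : Char T.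

Lemma g_spec (r c : 'I_n) : (r, c) \in T -> ~~ has_above T (r, c) -> val c != 0 ->
  [/\ (r, g T c) \in T, val (g T c) < val c &
      forall w : 'I_n, (r, w) \in T -> val (g T c) < val w -> val w < val c -> False].
Proof.
move=> rcT na c0.
have no : ~~ is_origin (r, c) by rewrite /is_origin /= negb_and c0 orbT.
have hl : has_left T (r, c) by move: (C2 HC rcT no); rewrite (negbTE na).
case/existsP: hl => q /andP [qT /andP [/eqP q1 q2]]; simpl in q1, q2.
pose P := fun w : 'I_n => ((r, w) \in T) && (val w < val c).
have Pq : P q.2 by rewrite /P -q1 -surjective_pairing qT q2.
have [cs /andP [csT csc] csmax] := arg_maxnP (fun w : 'I_n => val w) Pq.
have gp : gpred T c cs.
  apply/existsP; exists r; rewrite rcT na csT csc /=.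
  apply/existsP => [[w /and3P [wT h1 h2]]].
  have : val w <= val cs by apply: csmax; rewrite /P wT h2.
  by slia.
rewrite ffunE; case: pickP => [c' gp'|/(_ cs)]; last by rewrite gp.
case/existsP: gp' => r' /and5P [r'T na' c'T c'c nb] /=.
have er : r' = r.
  apply/val_inj/eqP; rewrite eqn_leq; apply/andP; split; rewrite leqNgt; apply/negP => h.
    by case/negP: na'; apply/existsP; exists (r, c); rewrite rcT eqxx.
  by case/negP: na; apply/existsP; exists (r', c); rewrite r'T eqxx.
rewrite er in c'T nb; split => // w wT h1 h2.
by case/negP: nb; apply/existsP; exists w; rewrite wT h1 h2.
Qed.

Lemma rowchar (r c k : 'I_n) : val r + val k = N ->
  (r, c) \in T <-> exists m, c = iter m (g T) k /\
                   forall m', m' < m -> ~~ has_above T (r, iter m' (g T) k).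
Proof.
move=> hk; split.
  move=> rcT.
  have ck : val c <= val k by have := C3 HC rcT; slia.
  move: {2}(val k - val c) (erefl (val k - val c)) => d.
  elim/ltn_ind: d c rcT ck => d IH c rcT ck ed.
  case: (eqVneq (val c) (val k)) => [eck|nck].
    by exists 0; split => //; apply/val_inj.
  have ck' : val c < val k by slia.
  pose P := fun w : 'I_n => ((r, w) \in T) && (val c < val w).
  have Pk : P k by rewrite /P ck' andbT C4.
  have [c2 /andP [c2T cc2] c2min] := arg_minnP (fun w : 'I_n => val w) Pk.
  have c2k : val c2 <= val k by have := C3 HC c2T; slia.
  have [m [e2 hm]] := IH (val k - val c2) ltac:(slia) c2 c2T c2k erefl.
  have c20 : val c2 != 0 by slia.
  have no : ~~ is_origin (r, c2) by rewrite /is_origin /= negb_and c20 orbT.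
  have hl : has_left T (r, c2) by apply/existsP; exists (r, c); rewrite rcT eqxx cc2.
  have na : ~~ has_above T (r, c2) by move: (C2 HC c2T no); rewrite hl addbT.
  have [gT glt gbet] := g_spec c2T na c20.
  have ec : g T c2 = c.
    apply/val_inj/eqP; rewrite eqn_leq; apply/andP; split.
      rewrite leqNgt; apply/negP => h.
      have : val c2 <= val (g T c2) by apply: c2min; rewrite /P gT h.
      by slia.
    by rewrite leqNgt; apply/negP => h; apply: (gbet c rcT h cc2).
  exists m.+1; split; first by rewrite iterS -e2 ec.
  move=> m'; rewrite ltnS leq_eqVlt => /orP [/eqP ->|h]; first by rewrite -e2.
  exact: hm.
case=> m [-> hm]; elim: m hm => [|m IH] hm.
  by apply: C4.
have rT : (r, iter m (g T) k) \in T by apply: IH => m' h; apply: hm; slia.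
have na : ~~ has_above T (r, iter m (g T) k) by apply: hm.
rewrite iterS.
case: (eqVneq (val (iter m (g T) k)) 0) => [x0|x0].
  by rewrite g0.
by case: (g_spec rT na x0).
Qed.

End GProps.

Lemma g_inj T1 T2 : Char T1 -> Char T2 -> g T1 = g T2 -> T1 = T2.
Proof.
move=> H1 H2 eg.
suff : forall R (p : pos), val p.1 = R -> (p \in T1) = (p \in T2).
  by move=> h; apply/setP => p; apply: (h _ p erefl).
elim/ltn_ind => R IH [r c] /= er.
case: (leqP (val r) N) => hr; last first.
  case: (boolP ((r, c) \in T1)) => h1.
    by have := C3 H1 h1; slia.
  case: (boolP ((r, c) \in T2)) => h2 //.
  by have := C3 H2 h2; slia.
have klt : N - val r < n by slia.
pose k := Ordinal klt.
have hk : val r + val k = N by rewrite /=; slia.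
have ha : forall x, has_above T1 (r, x) = has_above T2 (r, x).
  move=> x; apply: eq_existsb => q.
  case: (boolP (val q.1 < val r)) => h; last by rewrite !andbF.
  by rewrite (IH (val q.1)) //; rewrite -er.
apply/idP/idP => h.
  case/(rowchar H1 c hk): h => m [e hm].
  apply/(rowchar H2 c hk); exists m; split; first by rewrite -eg.
  by move=> m' /hm; rewrite ha eg.
case/(rowchar H2 c hk): h => m [e hm].
apply/(rowchar H1 c hk); exists m; split; first by rewrite eg.
by move=> m' /hm; rewrite -ha eg.
Qed.

End Main.

Lemma card_lt (n m : nat) (h : m <= n) : #|[pred k : 'I_n | val k < m]| = m.
Proof.
have wi : injective (widen_ord h) by move=> a b /(congr1 val) /= /val_inj.
rewrite -[RHS](card_ord m) -(card_imset _ wi); apply: eq_card => k.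
rewrite [in LHS]inE /=; apply/idP/imsetP => [km|[i _ ->]] /=; last exact: ltn_ord.
by exists (Ordinal km) => //; apply/val_inj.
Qed.
Lemma prod_maxn (n : nat) : \prod_(x < n.+1) maxn 1 x = n`!.
Proof. elim: n => [|n IH]; first by rewrite big_ord1.
rewrite big_ord_recr /= IH factS mulnC; congr (_ * _); lia. Qed.
Lemma famc (N : nat) : #|[set f : {ffun 'I_N.+1 -> 'I_N.+1} | [forall j, val (f j) < maxn 1 (val j)]]| = N`!.
Proof.
have -> : #|[set f : {ffun 'I_N.+1 -> 'I_N.+1} | [forall j, val (f j) < maxn 1 (val j)]]|
   = #|family (fun j : 'I_N.+1 => [pred k : 'I_N.+1 | val k < maxn 1 (val j)])|.
  by apply: eq_card => f; rewrite inE.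
rewrite card_family foldrE big_map big_enum /= -prod_maxn.
apply: eq_bigr => j _; apply: card_lt.
by move: (ltn_ord j); lia.
Qed.

Lemma card_bij (A B : finType) : #|A| = #|B| -> exists f : A -> B, bijective f.
Proof.
move=> e.
exists (fun x => enum_val (cast_ord e (enum_rank x))).
exists (fun y => enum_val (cast_ord (esym e) (enum_rank y))).
  by move=> x /=; rewrite enum_valK cast_ordK enum_rankK.
by move=> y /=; rewrite enum_valK cast_ordKV enum_rankK.
Qed.

Lemma count_UD (N : nat) :
  #|[set T : {set 'I_N.+1 * 'I_N.+1} | is_upper_diagonal_CNM T]| = N`!.
Proof.
have eS : [set T : {set 'I_N.+1 * 'I_N.+1} | is_upper_diagonal_CNM T]
        = [set T | Char T].
  apply/setP => T; rewrite !inE; apply/idP/idP; [exact: UD_Char | exact: Char_UD].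
have eF : #|[set f : {ffun 'I_N.+1 -> 'I_N.+1} | Fok f]| = N`!.
  by rewrite -famc; apply: eq_card => f; rewrite !inE.
rewrite eS -eF; apply/eqP; rewrite eqn_leq; apply/andP; split.
  have gi : {in [set T | Char T] &, injective (@g N)}.
    by move=> T1 T2; rewrite !inE => H1 H2; apply: g_inj.
  rewrite -(card_in_imset gi); apply: subset_leq_card; apply/subsetP => f /imsetP [T _ ->].
  by rewrite inE g_Fok.
have ti : {in [set f | Fok f] &, injective (@Tf N)}.
  by move=> f1 f2; rewrite !inE => H1 H2; apply: Tf_inj.
rewrite -(card_in_imset ti); apply: subset_leq_card; apply/subsetP => T /imsetP [f].
by rewrite inE => Hf ->; rewrite inE Tf_char.
Qed.

Theorem theorem4p3 (n : nat) (hn : 1 <= n) :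
  (exists f : {T : {set 'I_n * 'I_n} | is_upper_diagonal_CNM T} -> 'S_(n.-1),
      bijective f) /\
  #|[set T : {set 'I_n * 'I_n} | is_upper_diagonal_CNM T]| = (n.-1)`!.
Proof.
case: n hn => [//|N] _.
have hc := count_UD N.
split; last exact: hc.
apply: card_bij.
by rewrite card_sig card_Sn -hc; apply: eq_card => T; rewrite !inE.
Qed.
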